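(* Let $\mathbb F$ be algebraically closed and $A(s),B(s)\in\mathbb F[s]^{p\times q}$ pencils, with ranks $\rho_1,\rho_2$, $\rho=\min\{\rho_1,\rho_2\}$, homogeneous invariant factors $\phi_1\mid\cdots\mid\phi_{\rho_1}$ of $A(s)$ and $\psi_1\mid\cdots\mid\psi_{\rho_2}$ of $B(s)$, column minimal indices $c_1\ge\dots\ge c_{q-\rho_1}$ of $A$ and $d_1\ge\dots\ge d_{q-\rho_2}$ of $B$, row minimal indices $u_1\ge\dots\ge u_{p-\rho_1}$ of $A$ and $v_1\ge\dots\ge v_{p-\rho_2}$ of $B$. Let $(r_1,\dots),(s_1,\dots),(r'_1,\dots),(s'_1,\dots)$ be the conjugate partitions of $(c_i),(d_i),(u_i),(v_i)$, $r_0=q-\rho_1$, $s_0=q-\rho_2$, $r'_0=p-\rho_1$, $s'_0=p-\rho_2$, $\mathbf r=(r_0,r_1,\dots)$, $\mathbf s=(s_0,s_1,\dots)$, $\mathbf r'=(r'_0,\dots)$, $\mathbf s'=(s'_0,\dots)$. Assume $\mathbf r\ne\mathbf s$, $\mathbf r'=\mathbf s'$ and $G\le\sum_{i=1}^\rho\min\{r_i,s_i\}+\max\{e,e'\}$, where $x=\min\{i:r_i\ne s_i\}$, $e=\min\{i\ge x-1: s_{i+1}\ge r_{i+1}\}$, $e'=\min\{i\ge x-1: r_{i+1}\ge s_{i+1}\}$, $G=\rho-1-\sum_{i=1}^{\rho-1}\deg\gcd(\phi_{i+1},\psi_{i+1})-\sum_{i=1}^\rho r'_i$. Then there exist integers $b'>a'\ge0$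 such that $s_i-r_i=0$ for $0\le i\le a'$, $-(a'+2)\le s_i-r_i\le a'+2$ for $a'+1\le i\le b'$, and $-(b'+1)\le s_i-r_i\le b'+1$ for $i\ge b'+1$. Moreover, if $s_i-r_i=-(a'+2)$ for some $i\in\{a'+1,\dots,b'\}$ or $s_i-r_i=-(b'+1)$ for some $i>b'$, then $\phi_j\mid\psi_j$ for $1\le j\le\rho$; and if $s_i-r_i=a'+2$ for some $i\in\{a'+1,\dots,b'\}$ or $s_i-r_i=b'+1$ for some $i>b'$, then $\psi_j\mid\phi_j$ for $1\le j\le\rho$.
   Context: A pencil $A(s)=A_0+sA_1$ has rank equal to its rank over $\mathbb F(s)$. Homogeneous invariant factors are the invariant factors (homogeneous polynomials in $\mathbb F[s,t]$) of $tA_0+sA_1$, with conventions $\phi_i=1$ for $i<1$, $\phi_i=0$ for $i>\rho_1$ (similarly $\psi_i$). Column (row) minimal indices are the indices $k$ of the blocks $L_k(s)\in\mathbb F[s]^{k\times(k+1)}$ ($s$ on the diagonal, $1$ on superdiagonal), resp. $L_k(s)^T$, in the Kronecker canonical form, $q-\rho$ (resp. $p-\rho$) of them counting zeros. Conjugate of $(a_1,\dots,a_n)$ nonincreasing nonnegative: $(\bar a_1,\bar a_2,\dots)$, $\bar a_k=\#\{i:a_i\ge k\}$. *)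

(* Defs.v *)
From HB Require Import structures.
From mathcomp Require Import all_boot all_order all_algebra.
From mathcomp Require Import fraction.
From mathcomp Require Import mpoly.
Set Implicit Arguments. Unset Strict Implicit. Unset Printing Implicit Defensive.
Import Order.TTheory GRing.Theory Num.Theory.
Local Open Scope ring_scope.

Definition dvdr (R : comNzRingType) (a b : R) : Prop := exists c : R, b = c * a.

Definition is_gcd (R : comNzRingType) (g : R) (S : R -> Prop) : Prop :=
  (forall x, S x -> dvdr g x) /\
  (forall h, (forall x, S x -> dvdr h x) -> dvdr h g).

(* total degree of a multivariate polynomial (degree of 0 taken to be 0) *)
Definition tdeg (F : fieldType) (n : nat) (P : {mpoly F[n]}) : nat := (msize P).-1.

(* rank of A(s) = A0 + s A1 over the field F(s) *)
Definition pencil_rank (F : fieldType) (p q : nat) (A0 A1 : 'M[F]_(p, q)) : nat :=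
  \rank (map_mx (@FracField.tofrac {poly F})
           (map_mx polyC A0 + 'X *: map_mx polyC A1)).

(* the homogeneous pencil t A0 + s A1 in F[s,t]; s = 'X_0, t = 'X_1 *)
Definition hpencil (F : fieldType) (p q : nat) (A0 A1 : 'M[F]_(p, q))
  : 'M[{mpoly F[2]}]_(p, q) :=
  \matrix_(i, j) ('X_(1 : 'I_2) * (A0 i j)%:MP + 'X_(0 : 'I_2) * (A1 i j)%:MP).

(* the k x k minors of M (arbitrary choices of rows/columns: non-injective
   choices give 0 and reorderings give +-minors, so the gcd is unchanged) *)
Definition is_minor (R : comNzRingType) (p q k : nat) (M : 'M[R]_(p, q)) (x : R)
  : Prop :=
  exists (f : 'I_k -> 'I_p) (g : 'I_k -> 'I_q),
    x = \det (\matrix_(a, b) M (f a) (g b)).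

(* phi_1, ..., phi_rk are the invariant factors of M (rank rk): for every
   1 <= k <= rk, phi_1 * ... * phi_k is a gcd of the k x k minors
   (the k-th determinantal divisor), with the conventions phi_i = 1 for i < 1
   and phi_i = 0 for i > rk *)
Definition is_inv_factors (R : comNzRingType) (p q : nat) (M : 'M[R]_(p, q))
  (rk : nat) (phi : nat -> R) : Prop :=
  [/\ phi 0%N = 1,
      (forall i, (rk < i)%N -> phi i = 0) &
      (forall k, (1 <= k <= rk)%N ->
         is_gcd (\prod_(1 <= i < k.+1) phi i) (is_minor k M))].

Definition is_hom_inv_factors (F : fieldType) (p q : nat) (A0 A1 : 'M[F]_(p, q))
  (phi : nat -> {mpoly F[2]}) : Prop :=
  is_inv_factors (hpencil A0 A1) (pencil_rank A0 A1) phi.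

Inductive kblock (F : Type) :=
| KL of nat          (* L_k : k x (k+1), s on diagonal, 1 on superdiagonal *)
| KLT of nat         (* L_k^T : (k+1) x k *)
| KJ of F & nat      (* finite eigenvalue block  J_k(a) + s I_k *)
| KN of nat.         (* infinite eigenvalue block I_k + s J_k(0) *)

Definition kb_rows F (b : kblock F) : nat :=
  match b with KL k => k | KLT k => k.+1 | KJ _ k => k | KN k => k end.
Definition kb_cols F (b : kblock F) : nat :=
  match b with KL k => k.+1 | KLT k => k | KJ _ k => k | KN k => k end.

Definition kb_coef0 (F : nzRingType) (b : kblock F) (i j : nat) : F :=
  match b with
  | KL _ => (j == i.+1)%:R
  | KLT _ => (i == j.+1)%:R
  | KJ a _ => if i == j then a else (j == i.+1)%:R
  | KN _ => (i == j)%:R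
  end.
Definition kb_coef1 (F : nzRingType) (b : kblock F) (i j : nat) : F :=
  match b with
  | KL _ => (i == j)%:R
  | KLT _ => (i == j)%:R
  | KJ _ _ => (i == j)%:R
  | KN _ => (j == i.+1)%:R
  end.

Fixpoint kcf_entry (F : nzRingType) (sel : kblock F -> nat -> nat -> F)
  (bs : seq (kblock F)) (i j : nat) : F :=
  match bs with
  | [::] => 0
  | b :: bs' =>
      if (i < kb_rows b)%N && (j < kb_cols b)%N then sel b i j
      else if (kb_rows b <= i)%N && (kb_cols b <= j)%N then
        kcf_entry sel bs' (i - kb_rows b) (j - kb_cols b)
      else 0
  end.

Definition is_KCF (F : fieldType) (p q : nat) (A0 A1 : 'M[F]_(p, q))
  (bs : seq (kblock F)) : Prop :=
  [/\ sumn (map (@kb_rows F) bs) = p,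
      sumn (map (@kb_cols F) bs) = q &
      exists (P : 'M[F]_p) (Q : 'M[F]_q),
        [/\ P \in unitmx, Q \in unitmx,
            P *m A0 *m Q = \matrix_(i, j) kcf_entry (@kb_coef0 F) bs i j &
            P *m A1 *m Q = \matrix_(i, j) kcf_entry (@kb_coef1 F) bs i j]].

Definition col_min_ind F (bs : seq (kblock F)) : seq nat :=
  pmap (fun b => if b is KL k then Some k else None) bs.
Definition row_min_ind F (bs : seq (kblock F)) : seq nat :=
  pmap (fun b => if b is KLT k then Some k else None) bs.

Definition conj_part (a : seq nat) (k : nat) : nat := count (fun x => k <= x)%N a.

(* the sequence (r_0, r_1, ...): r_0 = n0, r_k = conjugate of a for k >= 1 *)
Definition ext_conj (n0 : nat) (a : seq nat) (k : nat) : nat :=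
  if k == 0%N then n0 else conj_part a k.

Definition is_least (P : nat -> Prop) (n : nat) : Prop :=
  P n /\ forall m, P m -> (n <= m)%N.

(* Main.v *)
Require Import Defs.
From HB Require Import structures.
From mathcomp Require Import all_boot all_order all_algebra.
From mathcomp Require Import fraction.
From mathcomp Require Import mpoly.
From mathcomp Require Import zify.
Set Implicit Arguments. Unset Strict Implicit. Unset Printing Implicit Defensive.
Import Order.TTheory GRing.Theory Num.Theory.

Section part_P1.
Local Open Scope ring_scope.

Section MP.
Variable F : fieldType.
Local Notation MP := {mpoly F[2]}.

Lemma tdegM (a b : MP) : a != 0 -> b != 0 -> tdeg (a * b) = (tdeg a + tdeg b)%N.
Proof.
move=> a0 b0; rewrite /tdeg msizeM //.
have : (0 < msize a)%N by rewrite lt0n msize_poly_eq0.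
have : (0 < msize b)%N by rewrite lt0n msize_poly_eq0.
case: (msize a) => // x; case: (msize b) => // y _ _ /=. by rewrite addnS.
Qed.

Lemma dvdr_tdeg (a b : MP) : dvdr a b -> b != 0 -> (tdeg a <= tdeg b)%N /\ a != 0.
Proof.
case=> c -> cb0. have c0 : c != 0 by apply: contraNneq cb0 => ->; rewrite mul0r.
have a0 : a != 0 by apply: contraNneq cb0 => ->; rewrite mulr0.
by rewrite tdegM // leq_addl.
Qed.

Lemma const_unit (c : MP) : c != 0 -> tdeg c = 0%N -> exists2 k : F, k != 0 & c = k%:MP.
Proof.
move=> c0 t0. apply/(msize_poly1P c). move: t0 c0; rewrite /tdeg -msize_poly_eq0.
by case: (msize c) => [|[|]].
Qed.

Lemma dvdr_const (a b : MP) : a != 0 -> tdeg a = 0%N -> dvdr a b.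
Proof.
move=> a0 t0; case: (const_unit a0 t0) => k k0 ->.
exists (b * (k^-1)%:MP); rewrite -mulrA -mpolyCM mulVf // mpolyC1 mulr1 //.
Qed.

Lemma dvdr_trans (a b c : MP) : dvdr a b -> dvdr b c -> dvdr a c.
Proof. by case=> x -> [y ->]; exists (y * x); rewrite mulrA. Qed.

Lemma dvdr_eq_tdeg (a b : MP) : dvdr a b -> b != 0 -> tdeg a = tdeg b -> dvdr b a.
Proof.
case=> c e b0 et. have c0 : c != 0 by apply: contraNneq b0; rewrite e => ->; rewrite mul0r.
have a0 : a != 0 by apply: contraNneq b0; rewrite e => ->; rewrite mulr0.
move: et; rewrite e tdegM // -{1}[tdeg a]add0n => /eqP; rewrite eqn_add2r => /eqP/esym ct.
case: (const_unit c0 ct) => k k0 ck.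
exists ((k^-1)%:MP); rewrite ck mulrA -mpolyCM mulVf // mpolyC1 mul1r //.
Qed.

End MP.

End part_P1.

Section part_P1b.
Local Open Scope ring_scope.

Section MP2.
Variable F : fieldType.
Local Notation MP := {mpoly F[2]}.
Local Notation i0 := (0 : 'I_2).
Local Notation i1 := (1 : 'I_2).
Local Notation sX := ('X_(0 : 'I_2) : MP).
Local Notation tX := ('X_(1 : 'I_2) : MP).

Lemma split_sN (a b : MP) N : a * tX ^+ N = b * sX ^+ N -> exists c, a = c * sX ^+ N.
Proof.
rewrite !mpolyXn => E.
set ms := (U_(i0) *+ N)%MM. set mt := (U_(i1) *+ N)%MM.
have key : forall m : 'X_{1..2}, (m i0 < N)%N -> a@_m = 0.
  move=> m lt. have := congr1 (mcoeff (mt + m)%MM) E. rewrite mcoeffMX => ->.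
  apply/eqP; rewrite mcoeff_eq0 (perm_mem (msuppMX _ _)); apply/negP => /mapP [m' _ e].
  have := congr1 (fun m0 : 'X_{1..2} => m0 i0) e => /=.
  rewrite !mnmDE /mt /ms !mulmnE !mnm1E /= mul1n mul0n add0n => e2.
  by move: lt; rewrite e2 ltnNge leq_addr.
exists (\sum_(m <- msupp a) a@_m *: 'X_[(m - ms)%MM]).
rewrite mulr_suml {1}[a]mpolyE; apply: eq_big_seq => m mi.
rewrite -scalerAl -mpolyXD submK //; apply/mnm_lepP => i.
rewrite /ms mulmnE mnm1E; case: (boolP (i0 == i)) => [/eqP <-|]; last by rewrite mul0n.
rewrite mul1n leqNgt; apply/negP => /key; apply/eqP; by rewrite -mcoeff_msupp.
Qed.

Lemma coprime_st (D H : MP) N : D != 0 -> dvdr D (sX ^+ N * H) -> dvdr D (tX ^+ N * H) ->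
  dvdr D H.
Proof.
move=> D0 [a ea] [b eb].
have e : a * tX ^+ N = b * sX ^+ N.
  apply: (mulIf D0). rewrite mulrAC -ea [RHS]mulrAC -eb mulrAC [RHS]mulrAC.
  by rewrite [sX ^+ N * _]mulrC.
case: (split_sN e) => c ec. exists c.
have s0 : sX ^+ N != 0 by rewrite expf_neq0 // -msize_poly_eq0 msizeX.
apply: (mulfI s0). by rewrite ea ec mulrCA mulrA.
Qed.
End MP2.

End part_P1b.

From mathcomp Require Import fingroup perm.
Section part_P2.
Local Open Scope ring_scope.

Lemma det_mul_rect (R : comNzRingType) k p (A : 'M[R]_(k,p)) (B : 'M[R]_(p,k)) :
 \det (A *m B) = \sum_(f : {ffun 'I_k -> 'I_p})
     (\prod_i A i (f i)) * \det (\matrix_(i,j) B (f i) j).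
Proof.
rewrite /determinant.
transitivity (\sum_(f : {ffun 'I_k -> 'I_p}) \sum_(s : 'S_k)
    (-1) ^+ s * \prod_i (A i (f i) * B (f i) (s i))).
  rewrite exchange_big; apply: eq_bigr => s _; rewrite -big_distrr /=; congr (_ * _).
  rewrite -(bigA_distr_bigA (fun i j => A i j * B j (s i))) /=.
  by by apply: eq_bigr => i _; rewrite mxE.
apply: eq_bigr => f _; rewrite big_distrr /=; apply: eq_bigr => s _.
rewrite big_split /= mulrCA; congr (_ * (_ * _)); by apply: eq_bigr => i _; rewrite mxE.

Qed.

Section Dvd.
Variable R : comNzRingType.
Lemma dvdr0 (d : R) : dvdr d 0. Proof. by exists 0; rewrite mul0r. Qed.
Lemma dvdrD (d x y : R) : dvdr d x -> dvdr d y -> dvdr d (x + y).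
Proof. by case=> a -> [b ->]; exists (a + b); rewrite mulrDl. Qed.
Lemma dvdr_mull (d x c : R) : dvdr d x -> dvdr d (c * x).
Proof. by case=> a ->; exists (c * a); rewrite mulrA. Qed.
Lemma dvdr_sum (I : Type) (r : seq I) (P : pred I) (G : I -> R) d :
  (forall i, P i -> dvdr d (G i)) -> dvdr d (\sum_(i <- r | P i) G i).
Proof.
move=> H; elim/big_rec: _ => [|i x Pi Hx]; first exact: dvdr0.
by apply: dvdrD => //; apply: H.
Qed.

Lemma minor_mull k p p' q (X : 'M[R]_(p',p)) (M : 'M[R]_(p,q)) d :
 (forall y, is_minor k M y -> dvdr d y) -> forall y, is_minor k (X *m M) y -> dvdr d y.
Proof.
move=> H y [f [g ->]].
have -> : \matrix_(a,b) (X *m M) (f a) (g b) =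
    (\matrix_(a,c) X (f a) c) *m (\matrix_(c,b) M c (g b)).
  by apply/matrixP => a b; rewrite !mxE; apply: eq_bigr => c _; rewrite !mxE.
rewrite det_mul_rect; apply: dvdr_sum => h _; apply: dvdr_mull; apply: H.
exists h, g; congr (\det _); apply/matrixP => a b; rewrite !mxE //.
Qed.

Lemma minor_mulr k p q q' (M : 'M[R]_(p,q)) (Y : 'M[R]_(q,q')) d :
 (forall y, is_minor k M y -> dvdr d y) -> forall y, is_minor k (M *m Y) y -> dvdr d y.
Proof.
move=> H y [f [g ->]].
have -> : \matrix_(a,b) (M *m Y) (f a) (g b) =
    ((\matrix_(a,c) Y c (g a)) *m (\matrix_(c,b) M (f b) c))^T.
  by apply/matrixP => a b; rewrite !mxE; apply: eq_bigr => c _; rewrite !mxE mulrC.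
rewrite det_tr det_mul_rect; apply: dvdr_sum => h _; apply: dvdr_mull; apply: H.
exists f, h; rewrite -det_tr; congr (\det _); apply/matrixP => a b; rewrite !mxE //.
Qed.
End Dvd.

End part_P2.

Section part_P3.
Local Open Scope ring_scope.

Definition kb_mn F (b : kblock F) : nat :=
  match b with KL k => k | KLT k => k | KJ _ k => k | KN k => k end.

Section Blocks.
Variable F : fieldType.
Variable S : comNzRingType.
Variables (t s : S) (emb : F -> S).
Hypothesis emb0 : emb 0 = 0.
Hypothesis emb1 : emb 1 = 1.

Definition kent (b : kblock F) (i j : nat) : S :=
  t * emb (kb_coef0 b i j) + s * emb (kb_coef1 b i j).

Definition blk (b : kblock F) : 'M[S]_(kb_rows b, kb_cols b) := \matrix_(i, j) kent b i j.

Fixpoint KMr (bs : seq (kblock F)) :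
  'M[S]_(sumn (map (@kb_rows F) bs), sumn (map (@kb_cols F) bs)) :=
  match bs with
  | [::] => 0
  | b :: bs' => block_mx (blk b) 0 0 (KMr bs')
  end.

Lemma embn (b : bool) : emb b%:R = b%:R.
Proof. by case: b. Qed.

Lemma addn_ltF m n : (m + n < m)%N = false. Proof. by rewrite ltnNge leq_addr. Qed.
Lemma ord_leF m (a : 'I_m) : (m <= a)%N = false. Proof. by rewrite leqNgt ltn_ord. Qed.

Lemma KMrE bs : KMr bs = \matrix_(i, j)
   (t * emb (kcf_entry (@kb_coef0 F) bs i j) + s * emb (kcf_entry (@kb_coef1 F) bs i j)).
Proof.
elim: bs => [|b bs IH] /=; first by apply/matrixP => [[i Hi]].
apply/matrixP => i j; rewrite -(splitK i) -(splitK j).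
case: (split i) => a; case: (split j) => c /=.
- rewrite block_mxEul !mxE /= !ltn_ord //.
- rewrite block_mxEur !mxE /= ltn_ord addn_ltF ord_leF /=.
  by rewrite emb0 !mulr0 addr0.
- rewrite block_mxEdl !mxE /= addn_ltF ord_leF andbF /=.
  by rewrite emb0 !mulr0 addr0.
- by rewrite block_mxEdr IH !mxE /= !addn_ltF !leq_addr /= !addKn.
Qed.


Definition fb (mode : bool) (b : kblock F) : 'I_(kb_mn b) -> 'I_(kb_rows b) :=
  match b as b0 return 'I_(kb_mn b0) -> 'I_(kb_rows b0) with
  | KL k => fun i => i
  | KLT k => fun i => if mode then widen_ord (leqnSn k) i else lift ord0 i
  | KJ _ k => fun i => i
  | KN k => fun i => i
  end.
Definition gb (mode : bool) (b : kblock F) : 'I_(kb_mn b) -> 'I_(kb_cols b) :=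
  match b as b0 return 'I_(kb_mn b0) -> 'I_(kb_cols b0) with
  | KL k => fun i => if mode then widen_ord (leqnSn k) i else lift ord0 i
  | KLT k => fun i => i
  | KJ _ k => fun i => i
  | KN k => fun i => i
  end.

Definition dsb (mode : bool) (b : kblock F) : S :=
  match b with
  | KL k => (if mode then s else t) ^+ k
  | KLT k => (if mode then s else t) ^+ k
  | KJ a k => (t * emb a + s) ^+ k
  | KN k => t ^+ k
  end.

Ltac decide_eqs := repeat match goal with
 | |- context [ (?a == ?b)%N ] =>
     (rewrite (_ : (a == b)%N = false); last by apply/eqP; lia) ||
     (rewrite (_ : (a == b)%N = true); last by apply/eqP; lia)
 end.

Ltac trig_tac := apply/is_trig_mxP => i j lt; rewrite !mxE /kent /=; try unfold bump; rewrite ?leq0n ?add1n !embn;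
  decide_eqs; rewrite ?emb0 ?mulr0 ?addr0 //.

Ltac diag_tac := rewrite -[k in RHS]card_ord -prodr_const; apply: eq_bigr => i _;
  rewrite !mxE /kent /=; try unfold bump; rewrite ?leq0n ?add1n ?embn; decide_eqs;
  rewrite ?emb0 ?emb1 ?mulr0 ?mulr1 ?addr0 ?add0r //.

Lemma det_SB mode b :
  \det (\matrix_(i, j) blk b (@fb mode b i) (@gb mode b j)) = dsb mode b.
Proof.
case: b => [k|k|a k|k] /=.
- case: mode => /=.
  + rewrite -det_tr det_trig; last by trig_tac.
    by diag_tac.
  + rewrite det_trig; last by trig_tac.
    by diag_tac.
- case: mode => /=.
  + rewrite det_trig; last by trig_tac.
    by diag_tac.
  + rewrite -det_tr det_trig; last by trig_tac.
    by diag_tac.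
- rewrite -det_tr det_trig; last by trig_tac.
  by diag_tac.
- rewrite -det_tr det_trig; last by trig_tac.
  by diag_tac.
Qed.


Fixpoint fsel (mode : bool) (bs : seq (kblock F)) :
  'I_(sumn (map (@kb_mn F) bs)) -> 'I_(sumn (map (@kb_rows F) bs)) :=
  match bs as bs0 return 'I_(sumn (map (@kb_mn F) bs0)) -> 'I_(sumn (map (@kb_rows F) bs0)) with
  | [::] => fun i => i
  | b :: bs' => fun i =>
      match split i with
      | inl a => lshift _ (@fb mode b a)
      | inr a => rshift _ (@fsel mode bs' a)
      end
  end.
Fixpoint gsel (mode : bool) (bs : seq (kblock F)) :
  'I_(sumn (map (@kb_mn F) bs)) -> 'I_(sumn (map (@kb_cols F) bs)) :=
  match bs as bs0 return 'I_(sumn (map (@kb_mn F) bs0)) -> 'I_(sumn (map (@kb_cols F) bs0)) with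
  | [::] => fun i => i
  | b :: bs' => fun i =>
      match split i with
      | inl a => lshift _ (@gb mode b a)
      | inr a => rshift _ (@gsel mode bs' a)
      end
  end.

Lemma zmxE m n i j : (0 : 'M[S]_(m,n)) i j = 0. Proof. by rewrite mxE. Qed.

Section BE.
Variables (m1 m2 n1 n2 : nat) (Aul : 'M[S]_(m1, n1)) (Aur : 'M[S]_(m1, n2))
  (Adl : 'M[S]_(m2, n1)) (Adr : 'M[S]_(m2, n2)).
Lemma bEul i j : block_mx Aul Aur Adl Adr (unsplit (inl i)) (unsplit (inl j)) = Aul i j.
Proof. exact: block_mxEul. Qed.
Lemma bEur i j : block_mx Aul Aur Adl Adr (unsplit (inl i)) (unsplit (inr j)) = Aur i j.
Proof. exact: block_mxEur. Qed.
Lemma bEdl i j : block_mx Aul Aur Adl Adr (unsplit (inr i)) (unsplit (inl j)) = Adl i j.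
Proof. exact: block_mxEdl. Qed.
Lemma bEdr i j : block_mx Aul Aur Adl Adr (unsplit (inr i)) (unsplit (inr j)) = Adr i j.
Proof. exact: block_mxEdr. Qed.
End BE.

Lemma KMr_cons b bs : KMr (b :: bs) = block_mx (blk b) 0 0 (KMr bs).
Proof. by []. Qed.

Lemma fsel_l mode b bs (a : 'I_(kb_mn b)) :
  @fsel mode (b :: bs) (unsplit (inl a)) = lshift _ (@fb mode b a).
Proof. by rewrite /= (unsplitK (inl a)). Qed.
Lemma fsel_r mode b bs (a : 'I_(sumn (map (@kb_mn F) bs))) :
  @fsel mode (b :: bs) (unsplit (inr a)) = rshift _ (@fsel mode bs a).
Proof. by rewrite /= (unsplitK (inr a)). Qed.
Lemma gsel_l mode b bs (a : 'I_(kb_mn b)) :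
  @gsel mode (b :: bs) (unsplit (inl a)) = lshift _ (@gb mode b a).
Proof. by rewrite /= (unsplitK (inl a)). Qed.
Lemma gsel_r mode b bs (a : 'I_(sumn (map (@kb_mn F) bs))) :
  @gsel mode (b :: bs) (unsplit (inr a)) = rshift _ (@gsel mode bs a).
Proof. by rewrite /= (unsplitK (inr a)). Qed.

Lemma det_minor mode bs :
  \det (\matrix_(i, j) KMr bs (@fsel mode bs i) (@gsel mode bs j)) = \prod_(b <- bs) dsb mode b.
Proof.
elim: bs => [|b bs IH]; first by rewrite big_nil det_mx00.
rewrite big_cons -IH -det_SB -(det_ublock _ 0); congr (\det _).
apply/matrixP => i j; rewrite -(splitK i) -(splitK j).
case: (split i) => a; case: (split j) => c; rewrite [LHS]mxE.
- by rewrite fsel_l gsel_l KMr_cons block_mxEul bEul mxE.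
- by rewrite fsel_l gsel_r KMr_cons block_mxEur bEur !zmxE.
- by rewrite fsel_r gsel_l KMr_cons block_mxEdl bEdl !zmxE.
- by rewrite fsel_r gsel_r KMr_cons block_mxEdr bEdr mxE.
Qed.

End Blocks.

Section Rank.
Variable F : fieldType.
Variable S : fieldType.
Variables (t s : S) (emb : F -> S).
Hypothesis emb0 : emb 0 = 0.
Hypothesis emb1 : emb 1 = 1.

Lemma rank_sub_le m n k (M : 'M[S]_(m,n)) (f : 'I_k -> 'I_m) (g : 'I_k -> 'I_n) :
  (\rank (\matrix_(i, j) M (f i) (g j)) <= \rank M)%N.
Proof.
have -> : \matrix_(i, j) M (f i) (g j) = rowsub f (rowsub g M^T)^T.
  by apply/matrixP => i j; rewrite !mxE.
rewrite rowsubE; apply: leq_trans (mxrankM_maxr _ _) _.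
rewrite mxrank_tr rowsubE; apply: leq_trans (mxrankM_maxr _ _) _.
by rewrite mxrank_tr.
Qed.

Lemma rank_KMr_le bs : (\rank (KMr t s emb bs) <= sumn (map (@kb_mn F) bs))%N.
Proof.
elim: bs => [|b bs IH]; first exact: rank_leq_row.
rewrite KMr_cons rank_diag_block_mx /=; apply: leq_add => //.
case: b => [k|k|a k|k]; [exact: rank_leq_row|exact: rank_leq_col|exact: rank_leq_row|exact: rank_leq_row].
Qed.

Lemma rank_KMr bs mode : \prod_(b <- bs) dsb t s emb mode b != 0 ->
  \rank (KMr t s emb bs) = sumn (map (@kb_mn F) bs).
Proof.
move=> nz; apply/eqP; rewrite eqn_leq rank_KMr_le /=.
apply: leq_trans (rank_sub_le _ (@fsel F mode bs) (@gsel F mode bs)).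
by rewrite mxrank_unit // unitmxE unitfE (det_minor _ _ emb0 emb1).
Qed.
End Rank.

End part_P3.

Section part_P4.
Local Open Scope ring_scope.

Lemma rank_unit_mul (K : fieldType) m n (X : 'M[K]_m) (M : 'M[K]_(m,n)) (Y : 'M[K]_n) :
  X \in unitmx -> Y \in unitmx -> \rank (X *m M *m Y) = \rank M.
Proof.
move=> uX uY; rewrite mxrankMfree ?row_free_unit //.
by rewrite -mxrank_tr trmx_mul mxrankMfree ?row_free_unit ?unitmx_tr // mxrank_tr.
Qed.

Definition kb_nj F (b : kblock F) : nat := match b with KJ _ k => k | KN k => k | _ => 0%N end.
Definition kb_nl F (b : kblock F) : nat := match b with KL k => k | KLT k => k | _ => 0%N end.
Definition hb (F : fieldType) (S : comNzRingType) (t s : S) (emb : F -> S) (b : kblock F) : S :=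
  match b with KJ a k => (t * emb a + s) ^+ k | KN k => t ^+ k | _ => 1 end.

Lemma dsb_split (F : fieldType) (S : comNzRingType) (t s : S) (emb : F -> S) mode bs :
  \prod_(b <- bs) dsb t s emb mode b =
  (if mode then s else t) ^+ (sumn (map (@kb_nl F) bs)) * \prod_(b <- bs) hb t s emb b.
Proof.
elim: bs => [|b bs IH]; first by rewrite !big_nil mulr1.
rewrite !big_cons IH /=; case: b => [k|k|a k|k] /=;
  by [rewrite exprD mul1r mulrA | rewrite add0n mulrCA].
Qed.

Lemma sumn_mn F (bs : seq (kblock F)) :
  sumn (map (@kb_mn F) bs) =
  (sumn (col_min_ind bs) + sumn (row_min_ind bs) + sumn (map (@kb_nj F) bs))%N.
Proof.
elim: bs => [|b bs IH] //=; case: b => [k|k|a k|k] /=; rewrite IH; lia.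
Qed.

Lemma sumn_nl F (bs : seq (kblock F)) :
  sumn (map (@kb_nl F) bs) = (sumn (col_min_ind bs) + sumn (row_min_ind bs))%N.
Proof.
elim: bs => [|b bs IH] //=; case: b => [k|k|a k|k] /=; rewrite IH; lia.
Qed.

Section Key.
Variable F : fieldType.
Local Notation FR := {fraction {poly F}}.

Lemma rank_part p q (A0 A1 : 'M[F]_(p,q)) (P : 'M[F]_p) (Q : 'M[F]_q) :
  P \in unitmx -> Q \in unitmx ->
  pencil_rank (P *m A0 *m Q) (P *m A1 *m Q) = pencil_rank A0 A1.
Proof.
move=> uP uQ; rewrite /pencil_rank.
set CP := map_mx polyC P; set CQ := map_mx polyC Q.
have -> : map_mx polyC (P *m A0 *m Q) + 'X *: map_mx polyC (P *m A1 *m Q) =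
   CP *m (map_mx polyC A0 + 'X *: map_mx polyC A1) *m CQ.
  by rewrite !map_mxM mulmxDr mulmxDl -scalemxAr -scalemxAl.
rewrite !map_mxM rank_unit_mul //.
- by rewrite /CP -map_mx_comp map_unitmx.
- by rewrite /CQ -map_mx_comp map_unitmx.
Qed.


Local Notation MP := {mpoly F[2]}.
Local Notation i0 := (0 : 'I_2).
Local Notation i1 := (1 : 'I_2).
Local Notation C := (mpolyC 2 (R := F)).

Lemma tdeg_prod_seq (T : eqType) (r : seq T) (f : T -> MP) :
  (forall x, x \in r -> f x != 0) ->
  tdeg (\prod_(x <- r) f x) = \sum_(x <- r) tdeg (f x).
Proof.
elim: r => [|x r IH] H; first by rewrite !big_nil /tdeg msize1.
rewrite !big_cons tdegM ?H ?mem_head // ?IH // => [y yr|]; first by apply: H; rewrite in_cons yr orbT.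
rewrite prodf_seq_neq0; apply/allP => y yr /=; apply: H; by rewrite in_cons yr orbT.
Qed.

Lemma tdeg_prod_all (T : Type) (r : seq T) (f : T -> MP) :
  (forall x, f x != 0) ->
  tdeg (\prod_(x <- r) f x) = \sum_(x <- r) tdeg (f x).
Proof.
move=> H; elim: r => [|x r IH]; first by rewrite !big_nil /tdeg msize1.
rewrite !big_cons tdegM ?H // ?IH //.
by elim/big_rec: _ => [|y z _ Hz]; [exact: oner_neq0 | rewrite mulf_neq0 ?H].
Qed.

Lemma tdeg_exp (x : MP) k : x != 0 -> tdeg (x ^+ k) = (k * tdeg x)%N.
Proof.
move=> x0; elim: k => [|k IH]; first by rewrite expr0 /tdeg msize1.
by rewrite exprS tdegM ?expf_neq0 // IH mulSn.
Qed.

Lemma X_neq0 (i : 'I_2) : ('X_i : MP) != 0.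
Proof. by rewrite -msize_poly_eq0 msizeX. Qed.

Lemma tdegX (i : 'I_2) : tdeg ('X_i : MP) = 1%N.
Proof. by rewrite /tdeg msizeX mdeg1. Qed.

Lemma lin_neq0 (a : F) : ('X_i1 * C a + 'X_i0 : MP) != 0.
Proof.
apply/eqP => /(congr1 (mcoeff U_(i0))).
rewrite mcoeffD mulrC mul_mpolyC mcoeffZ !mcoeffXU /= mulr0 add0r mcoeff0 => /eqP.
by rewrite oner_eq0.
Qed.

Lemma tdeg_lin (a : F) : (tdeg ('X_i1 * C a + 'X_i0 : MP) <= 1)%N.
Proof.
have h : (msize ('X_i1 * C a + 'X_i0 : MP) <= 2)%N.
  apply: leq_trans (msizeD_le _ _) _; rewrite geq_max; apply/andP; split.
    rewrite mulrC mul_mpolyC; apply: leq_trans (msizeZ_le _ _) _.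
    by rewrite msizeX mdeg1.
  by rewrite msizeX mdeg1.
by rewrite /tdeg; move: h; case: (msize _) => [|[|[|]]].
Qed.

Lemma hb_neq0 (b : kblock F) : hb 'X_i1 'X_i0 C b != 0.
Proof.
case: b => [k|k|a k|k] /=; rewrite ?oner_neq0 //.
- by rewrite expf_neq0 // lin_neq0.
- by rewrite expf_neq0 // X_neq0.
Qed.

Lemma tdeg_hb (b : kblock F) : (tdeg (hb 'X_i1 'X_i0 C b) <= kb_nj b)%N.
Proof.
case: b => [k|k|a k|k] /=; rewrite ?/tdeg ?msize1 //.
- rewrite -/(tdeg _) tdeg_exp ?lin_neq0 //.
  by rewrite -{2}[k]muln1 leq_mul2l tdeg_lin orbT.
- by rewrite -/(tdeg _) tdeg_exp ?X_neq0 // tdegX muln1.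
Qed.

Lemma tdeg_H (bs : seq (kblock F)) :
  (tdeg (\prod_(b <- bs) hb 'X_i1 'X_i0 C b) <= sumn (map (@kb_nj F) bs))%N.
Proof.
rewrite (@tdeg_prod_all _ bs (fun b => hb 'X_i1 'X_i0 C b) hb_neq0).
elim: bs => [|b bs IH]; first by rewrite big_nil.
by rewrite big_cons /=; apply: leq_add => //; apply: tdeg_hb.
Qed.



Lemma hpencilE p q (M0 M1 : 'M[F]_(p,q)) :
  hpencil M0 M1 = 'X_i1 *: map_mx C M0 + 'X_i0 *: map_mx C M1.
Proof. by apply/matrixP => i j; rewrite !mxE. Qed.

Lemma hpencil_mul p q (A0 A1 : 'M[F]_(p,q)) (P : 'M[F]_p) (Q : 'M[F]_q) :
  hpencil (P *m A0 *m Q) (P *m A1 *m Q) = map_mx C P *m hpencil A0 A1 *m map_mx C Q.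
Proof.
rewrite !hpencilE !map_mxM mulmxDr mulmxDl -!scalemxAr.
by rewrite [in LHS]scalemxAl [X in _ + X = _]scalemxAl.
Qed.

Lemma hK_E (bs : seq (kblock F)) :
  hpencil (\matrix_(i, j) kcf_entry (@kb_coef0 F) bs i j)
          (\matrix_(i, j) kcf_entry (@kb_coef1 F) bs i j) = KMr 'X_i1 'X_i0 C bs.
Proof.
rewrite (KMrE _ _ (mpolyC0 _ _)); apply/matrixP => i j; rewrite !mxE //.
Qed.

Lemma TK_E (bs : seq (kblock F)) :
  map_mx (@tofrac _) (map_mx polyC (\matrix_(i, j) kcf_entry (@kb_coef0 F) bs i j) +
      'X *: map_mx polyC (\matrix_(i, j) kcf_entry (@kb_coef1 F) bs i j))
  = KMr (1 : FR) (tofrac 'X) (@tofrac _ \o polyC) bs.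
Proof.
rewrite (KMrE _ _ (rmorph0 _)); apply/matrixP => i j; rewrite !mxE /=.
by rewrite rmorphD rmorphM mul1r.
Qed.


Lemma prod_hb_neq0 (bs : seq (kblock F)) : \prod_(b <- bs) hb 'X_i1 'X_i0 C b != 0.
Proof. by elim/big_rec: _ => [|y z _ Hz]; [exact: oner_neq0 | rewrite mulf_neq0 ?hb_neq0]. Qed.

Lemma key p q (A0 A1 : 'M[F]_(p,q)) bs phi :
  is_KCF A0 A1 bs -> is_hom_inv_factors A0 A1 phi ->
  [/\ pencil_rank A0 A1 = sumn (map (@kb_mn F) bs),
      (forall i, (1 <= i <= pencil_rank A0 A1)%N -> phi i != 0) &
      (\sum_(1 <= i < (pencil_rank A0 A1).+1) tdeg (phi i) <= sumn (map (@kb_nj F) bs))%N].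
Proof.
case=> Hp Hq [P [Q [uP uQ e0 e1]]] [_ _ Hg].
subst p q.
have rk : pencil_rank A0 A1 = sumn (map (@kb_mn F) bs).
  rewrite -(rank_part A0 A1 uP uQ) e0 e1 /pencil_rank TK_E.
  apply: (rank_KMr (rmorph0 _) (rmorph1 _) (mode := true)).
  rewrite dsb_split mulf_neq0 //.
    by rewrite expf_neq0 // tofrac_eq0 polyX_eq0.
  elim/big_rec: _ => [|b z _ Hz]; first exact: oner_neq0.
  apply: mulf_neq0; last exact: Hz.
  case: b => [k|k|a k|k] /=; [exact: oner_neq0|exact: oner_neq0| |].
    apply: expf_neq0; rewrite mul1r -rmorphD tofrac_eq0 addrC.
    by rewrite -size_poly_eq0 size_XaddC.
  by rewrite expr1n oner_neq0.
have hKE := hpencil_mul A0 A1 P Q; rewrite e0 e1 hK_E in hKE.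
rewrite rk in Hg *.
case: (posnP (sumn (map (@kb_mn F) bs))) => [R0 | Rpos].
  rewrite R0; split => //; first by move=> i /andP [h1 h2]; move: (leq_trans h1 h2).
  by rewrite big_geq.
have [Hd1 Hd2] := Hg _ (introT andP (conj Rpos (leqnn _))).
set D := \prod_(1 <= i < _) phi i in Hd1 Hd2 *.
have dvK : forall y, is_minor (sumn (map (@kb_mn F) bs)) (KMr 'X_i1 'X_i0 C bs) y -> dvdr D y.
  rewrite hKE; apply: minor_mulr; apply: minor_mull; exact Hd1.
have ms : forall mode, is_minor (sumn (map (@kb_mn F) bs)) (KMr 'X_i1 'X_i0 C bs)
                            (\prod_(b <- bs) dsb 'X_i1 'X_i0 C mode b).
  move=> mode; exists (@fsel F mode bs), (@gsel F mode bs).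
  by rewrite (det_minor _ _ (mpolyC0 _ _) (mpolyC1 _ _)).
have nzm : \prod_(b <- bs) dsb 'X_i1 'X_i0 C true b != 0.
  by rewrite dsb_split mulf_neq0 ?prod_hb_neq0 // expf_neq0 // X_neq0.
have D0 : D != 0.
  apply/negP => /eqP D0; case: (dvK _ (ms true)) => c; rewrite D0 mulr0 => e.
  by move: nzm; rewrite e eqxx.
have phinz : forall i, (1 <= i <= sumn (map (@kb_mn F) bs))%N -> phi i != 0.
  move=> i /andP [i1 iR]; move: D0; rewrite /D prodf_seq_neq0 => /allP /(_ i).
  by rewrite mem_index_iota i1 ltnS iR => /(_ isT).
split => //.
rewrite -(@tdeg_prod_seq _ _ phi); last first.
  by move=> x; rewrite mem_index_iota ltnS => hx; apply: phinz.
apply: leq_trans (tdeg_H bs).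
have := dvK _ (ms true); rewrite dsb_split => d1.
have := dvK _ (ms false); rewrite dsb_split => d2.
have dH := coprime_st D0 d1 d2.
by case: (dvdr_tdeg dH (prod_hb_neq0 bs)).
Qed.

End Key.

End part_P4.


Lemma sum_split3 (f : nat -> nat) m i n : (m <= i < n)%N ->
  \sum_(m <= j < n) f j = (\sum_(m <= j < i) f j + f i + \sum_(i.+1 <= j < n) f j)%N.
Proof.
move=> /andP [h1 h2]; rewrite (big_cat_nat h1 (ltnW h2)) /= (big_ltn h2) addnA //.
Qed.

Lemma sum_ge_len (f : nat -> nat) m n : (forall j, m <= j < n -> 1 <= f j)%N ->
  (n - m <= \sum_(m <= j < n) f j)%N.
Proof.
move=> H; apply: (@leq_trans (\sum_(m <= j < n) 1)%N).
  by rewrite sum_nat_const_nat muln1.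
rewrite big_nat_cond [X in (_ <= X)%N]big_nat_cond; apply: leq_sum => j /andP [hj _].
exact: H.
Qed.

Lemma core (r s : nat -> nat) rho x E dA dB :
  (x < E)%N -> (E <= rho.+1)%N -> (1 <= x)%N ->
  (forall i, x <= i < E -> s i < r i)%N ->
  (forall i, rho < i -> r i = 0)%N -> (forall i, rho < i -> s i = 0)%N ->
  (dA + \sum_(1 <= i < rho.+1) (r i - minn (r i) (s i)) <= E)%N ->
  (dB + \sum_(1 <= i < rho.+1) (s i - minn (r i) (s i)) <= E)%N ->
  [/\ (forall i, x <= i < E -> r i <= s i + x.+1 /\ (r i = s i + x.+1 -> dA = 0))%N,
      (forall i, E <= i -> r i <= s i + x)%N &
      (forall i, E <= i -> s i <= r i + E /\ (s i = r i + E -> dB = 0))%N].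
Proof.
move=> xE Erho x1 Hmid r0 s0 HA HB.
set TA := fun i => (r i - minn (r i) (s i))%N.
set TB := fun i => (s i - minn (r i) (s i))%N.
have splitA : \sum_(1 <= i < rho.+1) TA i =
   (\sum_(1 <= i < x) TA i + \sum_(x <= i < E) TA i + \sum_(E <= i < rho.+1) TA i)%N.
  have h1 : (1 <= x)%N by [].
  have h2 : (x <= rho.+1)%N by lia.
  have h3 : (x <= E)%N by lia.
  rewrite (big_cat_nat h1 h2) /= (big_cat_nat h3 Erho) /= addnA //.
have midge : (E - x <= \sum_(x <= i < E) TA i)%N.
  by apply: sum_ge_len => j hj; have := Hmid j hj; rewrite /TA; lia.
split.
- move=> i hi.
  have e := sum_split3 TA hi.
  have g1 : (i - x <= \sum_(x <= j < i) TA j)%N.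
    apply: sum_ge_len => j hj; have := Hmid j; rewrite /TA; lia.
  have g2 : (E - i.+1 <= \sum_(i.+1 <= j < E) TA j)%N.
    apply: sum_ge_len => j hj; have := Hmid j; rewrite /TA; lia.
  have ti : TA i = (r i - minn (r i) (s i))%N by [].
  have := Hmid i hi; move: HA; rewrite -/TA splitA e; lia.
- move=> i hi; case: (leqP i rho) => hr; last by rewrite r0.
  have hi2 : (E <= i < rho.+1)%N by lia.
  have e := sum_split3 TA hi2.
  have ti : TA i = (r i - minn (r i) (s i))%N by [].
  move: HA; rewrite -/TA splitA e; lia.
- move=> i hi; case: (leqP i rho) => hr; last by rewrite s0 //; lia.
  have hi2 : (1 <= i < rho.+1)%N by lia.
  have e := sum_split3 TB hi2.
  have ti : TB i = (s i - minn (r i) (s i))%N by [].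
  move: HB; rewrite -/TB e; lia.
Qed.


Section part_P5.
Local Open Scope ring_scope.
Definition concl (r s : nat -> nat) (PA PB : Prop) :=
  exists a' b' : nat,
    (a' < b')%N /\
    [/\ (forall i, (i <= a')%N -> s i = r i),
        (forall i, (a'.+1 <= i <= b')%N ->
           - (a'.+2)%:Z <= (s i)%:Z - (r i)%:Z <= (a'.+2)%:Z),
        (forall i, (b'.+1 <= i)%N ->
           - (b'.+1)%:Z <= (s i)%:Z - (r i)%:Z <= (b'.+1)%:Z),
        ((exists i, (a'.+1 <= i <= b')%N /\ (s i)%:Z - (r i)%:Z = - (a'.+2)%:Z) \/
         (exists i, (b' < i)%N /\ (s i)%:Z - (r i)%:Z = - (b'.+1)%:Z) -> PA) &
        ((exists i, (a'.+1 <= i <= b')%N /\ (s i)%:Z - (r i)%:Z = (a'.+2)%:Z) \/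
         (exists i, (b' < i)%N /\ (s i)%:Z - (r i)%:Z = (b'.+1)%:Z) -> PB)].

Lemma concl1 (r s : nat -> nat) x E dA dB (PA PB : Prop) :
  (1 <= x)%N -> (x < E)%N -> (forall i, (i < x)%N -> s i = r i) ->
  (forall i, x <= i < E -> s i < r i)%N ->
  (forall i, x <= i < E -> r i <= s i + x.+1 /\ (r i = s i + x.+1 -> dA = 0))%N ->
  (forall i, E <= i -> r i <= s i + x)%N ->
  (forall i, E <= i -> s i <= r i + E /\ (s i = r i + E -> dB = 0))%N ->
  (dA = 0%N -> PA) -> (dB = 0%N -> PB) -> concl r s PA PB.
Proof.
move=> x1 xE H0 Hm C1 C2 C3 IA IB.
exists x.-1, E.-1; split; first by lia.
split.
- move=> i hi; apply: H0; lia.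
- move=> i hi; have hi' : (x <= i < E)%N by lia.
  have := Hm i hi'; have [] := C1 i hi'; lia.
- move=> i hi; have hi' : (E <= i)%N by lia.
  have := C2 i hi'; have [] := C3 i hi'; lia.
- case=> [[i [hi e]]|[i [hi e]]].
  + have hi' : (x <= i < E)%N by lia.
    have [_ h] := C1 i hi'; apply: IA; apply: h; lia.
  + have hi' : (E <= i)%N by lia.
    have := C2 i hi'; lia.
- case=> [[i [hi e]]|[i [hi e]]].
  + have hi' : (x <= i < E)%N by lia.
    have := Hm i hi'; lia.
  + have hi' : (E <= i)%N by lia.
    have [_ h] := C3 i hi'; apply: IB; apply: h; lia.
Qed.

Lemma concl2 (r s : nat -> nat) x E dA dB (PA PB : Prop) :
  (1 <= x)%N -> (x < E)%N -> (forall i, (i < x)%N -> s i = r i) ->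
  (forall i, x <= i < E -> r i < s i)%N ->
  (forall i, x <= i < E -> s i <= r i + x.+1 /\ (s i = r i + x.+1 -> dB = 0))%N ->
  (forall i, E <= i -> s i <= r i + x)%N ->
  (forall i, E <= i -> r i <= s i + E /\ (r i = s i + E -> dA = 0))%N ->
  (dA = 0%N -> PA) -> (dB = 0%N -> PB) -> concl r s PA PB.
Proof.
move=> x1 xE H0 Hm C1 C2 C3 IA IB.
exists x.-1, E.-1; split; first by lia.
split.
- move=> i hi; apply: H0; lia.
- move=> i hi; have hi' : (x <= i < E)%N by lia.
  have := Hm i hi'; have [] := C1 i hi'; lia.
- move=> i hi; have hi' : (E <= i)%N by lia.
  have := C2 i hi'; have [] := C3 i hi'; lia.
- case=> [[i [hi e]]|[i [hi e]]].
  + have hi' : (x <= i < E)%N by lia.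
    have := Hm i hi'; lia.
  + have hi' : (E <= i)%N by lia.
    have [_ h] := C3 i hi'; apply: IA; apply: h; lia.
- case=> [[i [hi e]]|[i [hi e]]].
  + have hi' : (x <= i < E)%N by lia.
    have [_ h] := C1 i hi'; apply: IB; apply: h; lia.
  + have hi' : (E <= i)%N by lia.
    have := C2 i hi'; lia.
Qed.

End part_P5.


Lemma conj_zero (c : seq nat) n k : (forall y, y \in c -> y <= n)%N -> (n < k)%N ->
  conj_part c k = 0%N.
Proof.
move=> H nk; rewrite /conj_part; apply/eqP; rewrite -leqn0 leqNgt -has_count.
apply/hasP => [[y yc /= ky]]; have := H y yc; lia.
Qed.

Lemma sum_indic n y : (y <= n)%N -> \sum_(1 <= i < n.+1) (i <= y)%N = y.
Proof.
move=> yn; have h1 : (1 <= y.+1)%N by [].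
have h2 : (y.+1 <= n.+1)%N by [].
rewrite (big_cat_nat h1 h2) /=.
rewrite (eq_big_nat _ _ (F2 := fun _ => 1%N)) => [|i /andP [i1 i2]]; last by rewrite ltnS in i2; rewrite i2.
rewrite sum_nat_const_nat muln1 subSS subn0.
rewrite (eq_big_nat _ _ (F2 := fun _ => 0%N)) => [|i /andP [i1 i2]]; last by rewrite leqNgt i1.
by rewrite sum_nat_const_nat muln0 addn0.
Qed.

Lemma conj_sum (c : seq nat) n : (forall y, y \in c -> y <= n)%N ->
  \sum_(1 <= i < n.+1) conj_part c i = sumn c.
Proof.
elim: c => [|y c IH] H.
  by rewrite big1 // => i _; rewrite /conj_part.
rewrite /conj_part /= big_split /= sum_indic; last by apply: H; rewrite mem_head.
by rewrite IH // => z zc; apply: H; rewrite in_cons zc orbT.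
Qed.

Lemma mem_le_sumn (c : seq nat) y : y \in c -> (y <= sumn c)%N.
Proof.
elim: c => [|z c IH] //=; rewrite in_cons => /orP [/eqP ->|/IH h]; first exact: leq_addr.
by apply: leq_trans h (leq_addl _ _).
Qed.

Lemma sum_eq_termwise (f h : nat -> nat) m n :
  (forall i, m <= i < n -> f i <= h i)%N ->
  (\sum_(m <= i < n) h i <= \sum_(m <= i < n) f i)%N ->
  forall i, (m <= i < n)%N -> f i = h i.
Proof.
move=> H S i hi; move: S; rewrite (sum_split3 h hi) (sum_split3 f hi).
have l1 : (\sum_(m <= j < i) f j <= \sum_(m <= j < i) h j)%N.
  rewrite big_nat_cond [X in (_ <= X)%N]big_nat_cond; apply: leq_sum => j /andP [hj _].
  apply: H; lia.
have l2 : (\sum_(i.+1 <= j < n) f j <= \sum_(i.+1 <= j < n) h j)%N.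
  rewrite big_nat_cond [X in (_ <= X)%N]big_nat_cond; apply: leq_sum => j /andP [hj _].
  apply: H; lia.
have := H i hi; lia.
Qed.

Section Div.
Variable F : fieldType.

Lemma div_side rho (phi psi g : nat -> {mpoly F[2]}) :
  (forall i, (1 <= i <= rho)%N -> phi i != 0%R) ->
  (forall i, (1 <= i < rho)%N -> dvdr (g i) (phi i.+1) /\ dvdr (g i) (psi i.+1)) ->
  (\sum_(1 <= i < rho) tdeg (g i) <= \sum_(1 <= i < rho.+1) tdeg (phi i))%N /\
  ((\sum_(1 <= i < rho.+1) tdeg (phi i) - \sum_(1 <= i < rho) tdeg (g i))%N = 0%N ->
     forall j, (1 <= j <= rho)%N -> dvdr (phi j) (psi j)).
Proof.
move=> nz Hg.
case: (posnP rho) => [->|rpos].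
  by split => [|_ j /andP [j1 j2]]; [rewrite big_geq|lia].
have split1 : \sum_(1 <= i < rho.+1) tdeg (phi i) =
    (tdeg (phi 1%N) + \sum_(1 <= i < rho) tdeg (phi i.+1))%N.
  by rewrite big_nat_recl.
have tw : forall i, (1 <= i < rho)%N -> (tdeg (g i) <= tdeg (phi i.+1))%N.
  move=> i hi; have [d _] := Hg i hi; have [] := dvdr_tdeg d (nz i.+1 _) => //; lia.
have le : (\sum_(1 <= i < rho) tdeg (g i) <= \sum_(1 <= i < rho) tdeg (phi i.+1))%N.
  rewrite big_nat_cond [X in (_ <= X)%N]big_nat_cond; apply: leq_sum => j /andP [hj _].
  exact: tw.
split; first by rewrite split1; lia.
move=> e0.
have t1 : tdeg (phi 1%N) = 0%N by move: e0 le; rewrite split1; lia.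
have eqs := sum_eq_termwise tw (_ : _ <= _)%N.
move=> j /andP [j1 j2].
case: j j1 j2 => [//|[|i]] j1 j2.
- by apply: dvdr_const => //; apply: nz.
- have hi : (1 <= i.+1 < rho)%N by lia.
  have [d1 d2] := Hg _ hi.
  apply: dvdr_trans d2; apply: dvdr_eq_tdeg d1 (nz i.+2 _) _; first by lia.
  apply: eqs => //; lia.
Qed.
End Div.

Section part_P7.
Local Open Scope ring_scope.

Lemma sumZ (f : nat -> nat) m n :
  \sum_(m <= i < n) (f i)%:Z = (\sum_(m <= i < n) f i)%N%:Z.
Proof. by rewrite (big_morph Posz PoszD (erefl _)). Qed.

Lemma pencil_rank_le (F : fieldType) p q (A0 A1 : 'M[F]_(p,q)) : (pencil_rank A0 A1 <= p)%N.
Proof. exact: rank_leq_row. Qed.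


End part_P7.

Local Open Scope ring_scope.

Theorem lemma5p2 (F : closedFieldType) (p q : nat)
  (A0 A1 B0 B1 : 'M[F]_(p, q))
  (bsA bsB : seq (kblock F))
  (phi psi : nat -> {mpoly F[2]})
  (g : nat -> {mpoly F[2]})
  (x E E' : nat) :
  let rho1 := pencil_rank A0 A1 in
  let rho2 := pencil_rank B0 B1 in
  let rho := minn rho1 rho2 in
  let r := ext_conj (q - rho1) (col_min_ind bsA) in
  let s := ext_conj (q - rho2) (col_min_ind bsB) in
  let r' := ext_conj (p - rho1) (row_min_ind bsA) in
  let s' := ext_conj (p - rho2) (row_min_ind bsB) in
  is_KCF A0 A1 bsA -> is_KCF B0 B1 bsB ->
  is_hom_inv_factors A0 A1 phi -> is_hom_inv_factors B0 B1 psi ->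
  (* g i is gcd(phi_(i+1), psi_(i+1)) *)
  (forall i, (1 <= i < rho)%N -> is_gcd (g i) (fun y => y = phi i.+1 \/ y = psi i.+1)) ->
  (* r <> s and r' = s' *)
  (exists i, r i <> s i) ->
  (forall i, r' i = s' i) ->
  (* x = min{i : r_i <> s_i} *)
  is_least (fun i => r i <> s i) x ->
  (* e = E - 1, where E = min{j >= x : s_j >= r_j} (j = i + 1) *)
  is_least (fun j => (x <= j)%N /\ (r j <= s j)%N) E ->
  (* e' = E' - 1, where E' = min{j >= x : r_j >= s_j} *)
  is_least (fun j => (x <= j)%N /\ (s j <= r j)%N) E' ->
  (* G <= sum_{i=1}^rho min(r_i, s_i) + max(e, e') *)
  ((rho%:Z - 1) - (\sum_(1 <= i < rho) (tdeg (g i))%:Z)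
     - (\sum_(1 <= i < rho.+1) (r' i)%:Z)
   <= (\sum_(1 <= i < rho.+1) (minn (r i) (s i))%:Z) + ((maxn E E')%:Z - 1))%R ->
  exists a' b' : nat,
    (a' < b')%N /\
    [/\ (forall i, (i <= a')%N -> s i = r i),
        (forall i, (a'.+1 <= i <= b')%N ->
           - (a'.+2)%:Z <= (s i)%:Z - (r i)%:Z <= (a'.+2)%:Z),
        (forall i, (b'.+1 <= i)%N ->
           - (b'.+1)%:Z <= (s i)%:Z - (r i)%:Z <= (b'.+1)%:Z),
        ((exists i, (a'.+1 <= i <= b')%N /\ (s i)%:Z - (r i)%:Z = - (a'.+2)%:Z) \/
         (exists i, (b' < i)%N /\ (s i)%:Z - (r i)%:Z = - (b'.+1)%:Z) ->
         forall j, (1 <= j <= rho)%N -> dvdr (phi j) (psi j)) &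
        ((exists i, (a'.+1 <= i <= b')%N /\ (s i)%:Z - (r i)%:Z = (a'.+2)%:Z) \/
         (exists i, (b' < i)%N /\ (s i)%:Z - (r i)%:Z = (b'.+1)%:Z) ->
         forall j, (1 <= j <= rho)%N -> dvdr (psi j) (phi j))].
Proof.
move=> rho1 rho2 rho r s r' s' KA KB HA HB Hg [i0 Hne] Hr' Hx HE HE' Hineq.
have [rkA nzA degA] := key KA HA.
have [rkB nzB degB] := key KB HB.
rewrite -/rho1 in rkA nzA degA; rewrite -/rho2 in rkB nzB degB.
have le1 : (rho1 <= p)%N := pencil_rank_le A0 A1.
have le2 : (rho2 <= p)%N := pencil_rank_le B0 B1.
have e12 : rho1 = rho2 by have := Hr' 0%N; rewrite /r' /s' /ext_conj /=; lia.
have erho : rho = rho1 by rewrite /rho e12 minnn.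
have sA : rho1 = (sumn (col_min_ind bsA) + sumn (row_min_ind bsA) + sumn (map (@kb_nj F) bsA))%N.
  by rewrite rkA sumn_mn.
have sB : rho2 = (sumn (col_min_ind bsB) + sumn (row_min_ind bsB) + sumn (map (@kb_nj F) bsB))%N.
  by rewrite rkB sumn_mn.
have degA' : (\sum_(1 <= i < rho1.+1) tdeg (phi i) <= sumn (map (@kb_nj F) bsA))%N := degA.
have degB' : (\sum_(1 <= i < rho2.+1) tdeg (psi i) <= sumn (map (@kb_nj F) bsB))%N := degB.
clear rkA rkB degA degB.
have rS : forall i, (0 < i)%N -> r i = conj_part (col_min_ind bsA) i by case.
have sS : forall i, (0 < i)%N -> s i = conj_part (col_min_ind bsB) i by case.
have r'S : forall i, (0 < i)%N -> r' i = conj_part (row_min_ind bsA) i by case.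
have s'S : forall i, (0 < i)%N -> s' i = conj_part (row_min_ind bsB) i by case.
have r00 : r 0%N = s 0%N by rewrite /r /s /ext_conj /= e12.
clearbody r s r' s' rho rho1 rho2.
have cAle : forall y : nat, y \in col_min_ind bsA -> (y <= rho)%N.
  by move=> y /mem_le_sumn; lia.
have cBle : forall y : nat, y \in col_min_ind bsB -> (y <= rho)%N.
  by move=> y /mem_le_sumn; lia.
have uAle : forall y : nat, y \in row_min_ind bsA -> (y <= rho)%N.
  by move=> y /mem_le_sumn; lia.
have r0 : forall i, (rho < i)%N -> r i = 0%N.
  by move=> i hi; rewrite rS ?(conj_zero cAle hi) //; lia.
have s0 : forall i, (rho < i)%N -> s i = 0%N.
  by move=> i hi; rewrite sS ?(conj_zero cBle hi) //; lia.
have sumr : (\sum_(1 <= i < rho.+1) r i)%N = sumn (col_min_ind bsA).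
  rewrite (eq_big_nat _ _ (F2 := conj_part (col_min_ind bsA))) => [|i /andP [i1 _]].
    exact: conj_sum.
  exact: rS.
have sums : (\sum_(1 <= i < rho.+1) s i)%N = sumn (col_min_ind bsB).
  rewrite (eq_big_nat _ _ (F2 := conj_part (col_min_ind bsB))) => [|i /andP [i1 _]].
    exact: conj_sum.
  exact: sS.
have sumr' : (\sum_(1 <= i < rho.+1) r' i)%N = sumn (row_min_ind bsA).
  rewrite (eq_big_nat _ _ (F2 := conj_part (row_min_ind bsA))) => [|i /andP [i1 _]].
    exact: conj_sum.
  exact: r'S.
have sums' : (\sum_(1 <= i < rho.+1) r' i)%N = sumn (row_min_ind bsB).
  rewrite (eq_bigr s') => [|i _]; last exact: Hr'.
  rewrite (eq_big_nat _ _ (F2 := conj_part (row_min_ind bsB))) => [|i /andP [i1 _]].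
    apply: conj_sum => y /mem_le_sumn; rewrite /=; lia.
  exact: s'S.
have [Hxne Hxmin] := Hx.
have x1 : (0 < x)%N by rewrite lt0n; apply/eqP => x0; apply: Hxne; rewrite x0.
have below : forall i, (i < x)%N -> s i = r i.
  move=> i ix; case: (eqVneq (r i) (s i)) => [->//|/eqP ne].
  by have := Hxmin i ne; lia.
have xrho : (x <= rho)%N.
  case: (leqP x rho) => // h; case: Hxne; rewrite r0 ?s0 //.
rewrite !sumZ in Hineq.
have minle : (\sum_(1 <= i < rho.+1) minn (r i) (s i) <= \sum_(1 <= i < rho.+1) r i)%N.
  by apply: leq_sum => i _; apply: geq_minl.
have minle' : (\sum_(1 <= i < rho.+1) minn (r i) (s i) <= \sum_(1 <= i < rho.+1) s i)%N.
  by apply: leq_sum => i _; apply: geq_minr.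
have dR : (\sum_(1 <= i < rho.+1) (r i - minn (r i) (s i)))%N =
    (\sum_(1 <= i < rho.+1) r i - \sum_(1 <= i < rho.+1) minn (r i) (s i))%N.
  by rewrite sumnB // => i _; apply: geq_minl.
have dS : (\sum_(1 <= i < rho.+1) (s i - minn (r i) (s i)))%N =
    (\sum_(1 <= i < rho.+1) s i - \sum_(1 <= i < rho.+1) minn (r i) (s i))%N.
  by rewrite sumnB // => i _; apply: geq_minr.
have nzA' : forall i, (1 <= i <= rho)%N -> phi i != 0 by rewrite erho.
have nzB' : forall i, (1 <= i <= rho)%N -> psi i != 0 by rewrite erho e12.
have HgA : forall i, (1 <= i < rho)%N -> dvdr (g i) (phi i.+1) /\ dvdr (g i) (psi i.+1).
  by move=> i hi; have [h _] := Hg i hi; split; apply: h; [left|right].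
have HgB : forall i, (1 <= i < rho)%N -> dvdr (g i) (psi i.+1) /\ dvdr (g i) (phi i.+1).
  by move=> i hi; have [h _] := Hg i hi; split; apply: h; [right|left].
have [leA divA] := div_side nzA' HgA.
have [leB divB] := div_side nzB' HgB.
rewrite -erho in degA'; rewrite -e12 -erho in degB'.
have Hn : (rho <= \sum_(1 <= i < rho) tdeg (g i) + \sum_(1 <= i < rho.+1) r' i +
             \sum_(1 <= i < rho.+1) minn (r i) (s i) + maxn E E')%N.
  by move: Hineq; lia.
have [[xE rsE] Emin] := HE.
have [[xE' rsE'] Emin'] := HE'.
case: (ltngtP (s x) (r x)) => [lt|gt|eq]; last by case: Hxne.
- have eE' : E' = x by apply/eqP; rewrite eqn_leq xE' andbT; apply: Emin'; split => //; exact: ltnW.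
  have xltE : (x < E)%N by rewrite ltn_neqAle xE andbT; apply/eqP => ex; move: rsE; rewrite -ex; lia.
  have Erho : (E <= rho.+1)%N by apply: Emin; rewrite r0 ?s0 //; split => //; lia.
  have mid : forall i, (x <= i < E)%N -> (s i < r i)%N.
    move=> i /andP [h1 h2]; rewrite ltnNge; apply/negP => h; have := Emin i (conj h1 h); lia.
  have mE : maxn E E' = E by rewrite eE'; apply/maxn_idPl; exact: ltnW.
  rewrite mE in Hn.
  have [C1 C2 C3] := core xltE Erho x1 mid r0 s0
     (dA := (\sum_(1 <= i < rho.+1) tdeg (phi i) - \sum_(1 <= i < rho) tdeg (g i))%N)
     (dB := (\sum_(1 <= i < rho.+1) tdeg (psi i) - \sum_(1 <= i < rho) tdeg (g i))%N)
     ltac:(lia) ltac:(lia).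
  exact: (concl1 x1 xltE below mid C1 C2 C3 divA divB).
- have eE : E = x by apply/eqP; rewrite eqn_leq xE andbT; apply: Emin; split => //; exact: ltnW.
  have xltE : (x < E')%N by rewrite ltn_neqAle xE' andbT; apply/eqP => ex; move: rsE'; rewrite -ex; lia.
  have Erho : (E' <= rho.+1)%N by apply: Emin'; rewrite r0 ?s0 //; split => //; lia.
  have mid : forall i, (x <= i < E')%N -> (r i < s i)%N.
    move=> i /andP [h1 h2]; rewrite ltnNge; apply/negP => h; have := Emin' i (conj h1 h); lia.
  have mE : maxn E E' = E' by rewrite eE; apply/maxn_idPr; exact: ltnW.
  rewrite mE in Hn.
  have minC : forall i, minn (s i) (r i) = minn (r i) (s i) by move=> i; rewrite minnC.
  have [C1 C2 C3] := core xltE Erho x1 mid s0 r0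
     (dA := (\sum_(1 <= i < rho.+1) tdeg (psi i) - \sum_(1 <= i < rho) tdeg (g i))%N)
     (dB := (\sum_(1 <= i < rho.+1) tdeg (phi i) - \sum_(1 <= i < rho) tdeg (g i))%N)
     ltac:(rewrite (eq_bigr _ (fun i _ => congr1 _ (minC i))); lia)
     ltac:(rewrite (eq_bigr _ (fun i _ => congr1 _ (minC i))); lia).
  exact: (concl2 x1 xltE below mid C1 C2 C3 divA divB).
Qed.
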